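(* Let $M$ be a graded $R$-module, and give $qp.Spec_g(M)$ the quasi-Zariski topology. Then: (1) $qp.Spec_g(M)$ is a $T_1$-space if and only if it is a $T_0$-space and for every $Q\in qp.Spec_g(M)$, $Gr((Q:_RM))$ is a maximal element of $\{Gr((K:_RM))\mid K\in qp.Spec_g(M)\}$. (2) $qp.Spec_g(M)$ is a $T_1$-space if and only if it is a $T_0$-space and every graded quasi-primary submodule of $M$ satisfying the graded primeful property is a maximal element (with respect to inclusion) of $qp.Spec_g(M)$. (3) If $(0)\in qp.Spec_g(M)$, then $qp.Spec_g(M)$ is a $T_1$-space if and only if $(0)$ is the only graded quasi-primary submodule of $M$ satisfying the graded primeful property. (4) If $qp.Spec_g(M)$ is a $T_0$-space and $qp.Spec_g(M)=Max_g(M)$, then $qp.Spec_g(M)$ is a $T_1$-space.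
   Context: $R=\bigoplus_{g\in G}R_g$ is a graded commutative ring with identity graded by a group $G$, $h(R)=\bigcup_g R_g$; $M$ is a graded $R$-module, $h(M)$ its homogeneous elements. $Gr(I)$ is the graded radical of a graded ideal $I$. $(K:_RM)=\{r: rM\subseteq K\}$. Graded prime submodule: proper graded $P$ with $rm\in P$ ($r\in h(R), m\in h(M)$) implying $m\in P$ or $r\in(P:_RM)$. $Gr_M(K)$: intersection of graded prime submodules containing $K$ ($M$ if none). Graded primeful property of $K$: for each graded prime $p\supseteq(K:_RM)$ there is a graded prime submodule $P\supseteq K$ with $(P:_RM)=p$. Graded quasi-primary submodule: proper graded $Q$ with $rm\in Q$ ($r\in h(R),m\in h(M)$) implying $r\in Gr((Q:_RM))$ or $m\in Gr_M(Q)$. $qp.Spec_g(M)$: graded quasi-primary submodules with the graded primeful property. $qp\text{-}V_M^g(K)=\{Q\in qp.Spec_g(M): Gr((Q:_RM))\supseteq Gr((K:_RM))\}$; the quasi-Zariski topology has closed sets exactly these. $Max_g(M)$ is the set of graded maximal submodules of $M$, i.e. graded submodules $K\ne M$ with no graded submodule strictly between $K$ and $M$. *)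

(* Defs.v *)
From HB Require Import structures.
From mathcomp Require Import all_boot all_order all_algebra.
From mathcomp Require Import boolp classical_sets.
Set Implicit Arguments. Unset Strict Implicit. Unset Printing Implicit Defensive.
Import GRing.Theory.
Local Open Scope ring_scope.
Local Open Scope classical_set_scope.

Record group_law (G : Type) := GroupLaw {
  gmul : G -> G -> G;
  gone : G;
  ginv : G -> G;
  gmulA : forall x y z, gmul x (gmul y z) = gmul (gmul x y) z;
  gmul1 : forall x, gmul gone x = x;
  gmulV : forall x, gmul (ginv x) x = gone }.

Section Graded.
Context {G : eqType}.

Definition addsubgroup {V : zmodType} (A : set V) :=
  A 0 /\ forall x y, A x -> A y -> A (x - y).

Definition direct_decomp {V : zmodType} (F : G -> set V) :=
  (forall x : V, exists (s : seq G) (c : G -> V),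
      [/\ uniq s, (forall g, g \in s -> F g (c g)) & x = \sum_(g <- s) c g]) /\
  (forall (s : seq G) (c : G -> V), uniq s -> (forall g, g \in s -> F g (c g)) ->
      \sum_(g <- s) c g = 0 -> forall g, g \in s -> c g = 0).

Definition homog {V : zmodType} (F : G -> set V) : set V :=
  [set x | exists g, F g x].

Definition graded_subset {V : zmodType} (F : G -> set V) (N : set V) :=
  forall (s : seq G) (c : G -> V), uniq s -> (forall g, g \in s -> F g (c g)) ->
    N (\sum_(g <- s) c g) -> forall g, g \in s -> N (c g).

Definition graded_ring {R : comNzRingType} (L : group_law G) (RG : G -> set R) :=
  [/\ forall g, addsubgroup (RG g), direct_decomp RG &
      forall g h a b, RG g a -> RG h b -> RG (gmul L g h) (a * b)].

Definition graded_module {R : comNzRingType} {M : lmodType R} (L : group_law G)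
    (RG : G -> set R) (MG : G -> set M) :=
  [/\ forall g, addsubgroup (MG g), direct_decomp MG &
      forall g h r m, RG g r -> MG h m -> MG (gmul L g h) (r *: m)].

Definition ideal {R : comNzRingType} (I : set R) :=
  [/\ I 0, forall x y, I x -> I y -> I (x + y) & forall r x, I x -> I (r * x)].

Definition submodule {R : comNzRingType} {M : lmodType R} (N : set M) :=
  [/\ N 0, forall x y, N x -> N y -> N (x + y) & forall (r : R) x, N x -> N (r *: x)].

Definition graded_ideal {R : comNzRingType} (RG : G -> set R) (I : set R) :=
  ideal I /\ graded_subset RG I.

Definition graded_submodule {R : comNzRingType} {M : lmodType R} (MG : G -> set M)
    (N : set M) :=
  submodule N /\ graded_subset MG N.

Definition colon {R : comNzRingType} {M : lmodType R} (K : set M) : set R :=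
  [set r | forall m : M, K (r *: m)].

Definition Gr {R : comNzRingType} (RG : G -> set R) (I : set R) : set R :=
  [set x | forall (s : seq G) (c : G -> R), uniq s ->
     (forall g, g \in s -> RG g (c g)) -> x = \sum_(g <- s) c g ->
     forall g, g \in s -> exists n : nat, I (c g ^+ n.+1)].

Definition graded_prime_ideal {R : comNzRingType} (RG : G -> set R) (p : set R) :=
  [/\ graded_ideal RG p, p <> setT &
      forall a b, homog RG a -> homog RG b -> p (a * b) -> p a \/ p b].

Definition graded_prime_submodule {R : comNzRingType} {M : lmodType R}
    (RG : G -> set R) (MG : G -> set M) (P : set M) :=
  [/\ graded_submodule MG P, P <> setT &
      forall r m, homog RG r -> homog MG m -> P (r *: m) -> P m \/ colon P r].

(* Gr_M(K): intersection of the graded prime submodules containing K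
   (= M if there is none) *)
Definition GrM {R : comNzRingType} {M : lmodType R} (RG : G -> set R)
    (MG : G -> set M) (K : set M) : set M :=
  [set m | forall P, graded_prime_submodule RG MG P -> K `<=` P -> P m].

Definition graded_primeful {R : comNzRingType} {M : lmodType R} (RG : G -> set R)
    (MG : G -> set M) (K : set M) :=
  forall p, graded_prime_ideal RG p -> colon K `<=` p ->
    exists P, [/\ graded_prime_submodule RG MG P, K `<=` P & colon P = p].

Definition graded_quasi_primary {R : comNzRingType} {M : lmodType R}
    (RG : G -> set R) (MG : G -> set M) (Q : set M) :=
  [/\ graded_submodule MG Q, Q <> setT &
      forall r m, homog RG r -> homog MG m -> Q (r *: m) ->
        Gr RG (colon Q) r \/ GrM RG MG Q m].

Definition qpSpec {R : comNzRingType} {M : lmodType R} (RG : G -> set R)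
    (MG : G -> set M) : set (set M) :=
  [set Q | graded_quasi_primary RG MG Q /\ graded_primeful RG MG Q].

Definition qpV {R : comNzRingType} {M : lmodType R} (RG : G -> set R)
    (MG : G -> set M) (K : set M) : set (set M) :=
  [set Q | qpSpec RG MG Q /\ Gr RG (colon K) `<=` Gr RG (colon Q)].

Definition qp_closed {R : comNzRingType} {M : lmodType R} (RG : G -> set R)
    (MG : G -> set M) : set (set (set M)) :=
  [set F | exists K, graded_submodule MG K /\ F = qpV RG MG K].

(* separation axioms, phrased through the closed sets
   (open sets are complements of closed sets) *)
Definition qpT0 {R : comNzRingType} {M : lmodType R} (RG : G -> set R)
    (MG : G -> set M) :=
  forall Q Q', qpSpec RG MG Q -> qpSpec RG MG Q' -> Q <> Q' ->
    exists F, qp_closed RG MG F /\ ((F Q /\ ~ F Q') \/ (F Q' /\ ~ F Q)).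

Definition qpT1 {R : comNzRingType} {M : lmodType R} (RG : G -> set R)
    (MG : G -> set M) :=
  forall Q Q', qpSpec RG MG Q -> qpSpec RG MG Q' -> Q <> Q' ->
    exists F, qp_closed RG MG F /\ F Q' /\ ~ F Q.

Definition MaxG {R : comNzRingType} {M : lmodType R} (MG : G -> set M) : set (set M) :=
  [set K | [/\ graded_submodule MG K, K <> setT &
     forall N, graded_submodule MG N -> K `<=` N -> N = K \/ N = setT]].

End Graded.

(* Main.v *)
Require Import Defs.
From HB Require Import structures.
From mathcomp Require Import all_boot all_order all_algebra.
From mathcomp Require Import boolp classical_sets.
Set Implicit Arguments. Unset Strict Implicit. Unset Printing Implicit Defensive.
Import GRing.Theory.
Local Open Scope ring_scope.
Local Open Scope classical_set_scope.

Lemma gmulV_r (G : Type) (L : group_law G) x : gmul L x (ginv L x) = gone L.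
Proof.
set y := ginv L x.
transitivity (gmul L (gmul L (ginv L y) y) (gmul L x y)); first by rewrite gmulV gmul1.
by rewrite -gmulA (gmulA L y x y) /y gmulV gmul1 gmulV.
Qed.

Lemma gmul1_r (G : Type) (L : group_law G) x : gmul L x (gone L) = x.
Proof. by rewrite -(gmulV L x) gmulA gmulV_r gmul1. Qed.

Lemma gmulK (G : Type) (L : group_law G) g h :
  gmul L (gmul L g h) (ginv L h) = g.
Proof. by rewrite -gmulA gmulV_r gmul1_r. Qed.

Lemma sum_closed (V : zmodType) (N : set V) (I : eqType) (s : seq I) (F : I -> V) :
  N 0 -> (forall x y, N x -> N y -> N (x + y)) ->
  (forall i, i \in s -> N (F i)) -> N (\sum_(i <- s) F i).
Proof.
move=> N0 ND; elim: s => [|a s IH] H; first by rewrite big_nil.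
rewrite big_cons; apply: ND; first by apply: H; rewrite mem_head.
by apply: IH => i iS; apply: H; rewrite in_cons iS orbT.
Qed.

Lemma shift_graded (G : eqType) (L : group_law G) (V : zmodType)
  (F : G -> set V) (N : set V) (h : G) (s : seq G) (c : G -> V) :
  graded_subset F N -> uniq s -> (forall g, g \in s -> F (gmul L g h) (c g)) ->
  N (\sum_(g <- s) c g) -> forall g, g \in s -> N (c g).
Proof.
move=> gN us Fc Ns g gs.
pose f := fun g => gmul L g h.
have finj : injective f by move=> x y /(congr1 (fun z => gmul L z (ginv L h))); rewrite !gmulK.
pose c' := fun k => c (gmul L k (ginv L h)).
have := gN (map f s) c' _ _ _ (f g) (map_f f gs).
rewrite /c' /f gmulK; apply.
- by rewrite map_inj_uniq.
- by move=> k /mapP [x xs ->]; rewrite gmulK; apply: Fc.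
- by rewrite big_map; under eq_bigr => x _ do rewrite gmulK.
Qed.
Lemma colon_graded (R : comNzRingType) (G : eqType) (L : group_law G)
  (RG : G -> set R) (M : lmodType R) (MG : G -> set M)
  (hM : graded_module L RG MG) (K : set M) :
  graded_submodule MG K -> graded_ideal RG (colon K).
Proof.
case: hM => _ [hdec _] hmul [[K0 KD KZ] gK]; split.
  split.
  - by move=> m; rewrite scale0r.
  - by move=> x y Hx Hy m; rewrite scalerDl; apply: KD.
  - by move=> r x Hx m; rewrite -scalerA; apply: KZ.
move=> s c us Hc Hs g gs m.
have [t [d [ut Hd ->]]] := hdec m.
rewrite scaler_sumr; apply: sum_closed => // h ht.
apply: (@shift_graded G L M MG K h s (fun g => c g *: d h)) => //.
- by move=> g' g's; apply: hmul; [apply: Hc | apply: Hd].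
- by rewrite -scaler_suml; apply: Hs.
Qed.

Lemma quot_graded (R : comNzRingType) (G : eqType) (L : group_law G)
  (RG : G -> set R) (hR : graded_ring L RG) (m : set R) (b : R) (hb : G) :
  graded_ideal RG m -> RG hb b -> graded_ideal RG [set r | m (r * b)].
Proof.
case: hR => _ [hdec _] hmul [[m0 mD mM] gm] Hb; split.
  split => /=.
  - by rewrite mul0r.
  - by move=> x y Hx Hy; rewrite mulrDl; apply: mD.
  - by move=> r x Hx; rewrite -mulrA; apply: mM.
move=> s c us Hc Hs g gs /=.
apply: (@shift_graded G L R RG m hb s (fun g => c g * b)) => //.
- by move=> g' g's; apply: hmul; [apply: Hc | apply: Hb].
- by rewrite -mulr_suml; apply: Hs.
Qed.

Lemma sub_Gr (R : comNzRingType) (G : eqType) (RG : G -> set R) (I : set R) :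
  graded_ideal RG I -> I `<=` Gr RG I.
Proof.
move=> [_ gI] x Ix s c us Hc xE g gs; exists 0%N; rewrite expr1.
by apply: (gI s c) => //; rewrite -xE.
Qed.

Lemma Gr_mono (R : comNzRingType) (G : eqType) (RG : G -> set R) (I J : set R) :
  I `<=` J -> Gr RG I `<=` Gr RG J.
Proof.
move=> IJ x Hx s c us Hc xE g gs.
by have [n Hn] := Hx s c us Hc xE g gs; exists n; apply: IJ.
Qed.

Lemma colon_mono (R : comNzRingType) (M : lmodType R) (K K' : set M) :
  K `<=` K' -> colon K `<=` colon K'.
Proof. by move=> KK r Hr m; apply: KK; apply: Hr. Qed.

Lemma Gr_prime (R : comNzRingType) (G : eqType) (L : group_law G)
  (RG : G -> set R) (hR : graded_ring L RG) (p : set R) :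
  graded_prime_ideal RG p -> Gr RG p `<=` p.
Proof.
case: hR => _ [hdec _] hmul [[[p0 pD pM] gp] _ pP] x Hx.
have [s [c [us Hc xE]]] := hdec x.
rewrite xE; apply: sum_closed => // g gs.
have [n Hn] := Hx s c us Hc xE g gs.
have homX : forall k, exists h, RG h (c g ^+ k.+1).
  elim=> [|k [h Hh]]; first by exists g; rewrite expr1; apply: Hc.
  by exists (gmul L g h); rewrite exprS; apply: hmul => //; apply: Hc.
elim: n Hn => [|n IH]; first by rewrite expr1.
rewrite exprS => H.
have hg : homog RG (c g) by exists g; apply: Hc.
have hn : homog RG (c g ^+ n.+1) by have [h Hh] := homX n; exists h.
by case: (pP _ _ hg hn H) => // /IH.
Qed.
Definition famI (R : comNzRingType) (G : eqType) (RG : G -> set R) (I : set R) :=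
  graded_ideal RG I /\ ~ I 1.

Lemma max_ideal (R : comNzRingType) (G : eqType) (RG : G -> set R) (C : set R) :
  famI RG C -> exists m, [/\ famI RG m, C `<=` m &
     forall p, famI RG p -> m `<=` p -> p = m].
Proof.
move=> fC.
pose P := fun X : set R => famI RG (C `|` X).
have chain : forall F : set (set R), F `<=` P -> total_on F subset ->
    P (\bigcup_(X in F) X).
  move=> F FP Ftot.
  set U := C `|` \bigcup_(X in F) X.
  have two : forall x y, U x -> U y -> exists J, [/\ famI RG J, J `<=` U, J x & J y].
    move=> x y [Cx|[X FX Xx]] [Cy|[Y FY Yy]].
    - by exists C; split => // z Cz; left.
    - exists (C `|` Y); split => //; [exact: FP| |by left|by right].
      by move=> z [Cz|Yz]; [left|right; exists Y].
    - exists (C `|` X); split => //; [exact: FP| |by right|by left].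
      by move=> z [Cz|Xz]; [left|right; exists X].
    - have [XY|YX] := Ftot X Y FX FY.
      + exists (C `|` Y); split => //; [exact: FP| |by right; apply: XY|by right].
        by move=> z [Cz|Yz]; [left|right; exists Y].
      + exists (C `|` X); split => //; [exact: FP| |by right|by right; apply: YX].
        by move=> z [Cz|Xz]; [left|right; exists X].
  have [[[C0 _ _] _] _] := fC.
  split; first split; first split.
  - by left.
  - move=> x y Ux Uy; have [J [[[[_ JD _] _] _] JU Jx Jy]] := two x y Ux Uy.
    by apply: JU; apply: JD.
  - move=> r x Ux; have [J [[[[_ _ JM] _] _] JU Jx _]] := two x x Ux Ux.
    by apply: JU; apply: JM.
  - move=> s c us Hc Us g gs.
    have [J [[[_ gJ] _] JU Js _]] := two _ _ Us Us.
    by apply: JU; apply: (gJ s c).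
  - move=> U1; have [J [[_ nJ] _ J1 _]] := two _ _ U1 U1; exact: nJ.
have [A [PA maxA]] := Zorn_bigcup chain.
exists (C `|` A); split; [exact: PA|by move=> x Cx; left|].
move=> p fp mp.
have Cp : C `|` p = p.
  by apply/seteqP; split => [z [Cz|//]|z pz]; [apply: mp; left|right].
have Pp : P p by rewrite /P Cp.
have Ap : A `<=` p by move=> z Az; apply: mp; right.
case: (pselect (A = p)) => [Ep|nAp]; first by rewrite -Cp Ep.
exfalso; apply: (maxA p) => //; split => // pA; apply: nAp.
by apply/seteqP; split.
Qed.

Lemma max_prime (R : comNzRingType) (G : eqType) (L : group_law G)
  (RG : G -> set R) (hR : graded_ring L RG) (m : set R) :
  famI RG m -> (forall p, famI RG p -> m `<=` p -> p = m) ->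
  graded_prime_ideal RG m.
Proof.
move=> [gm n1] mx; split => //.
  by move=> mT; apply: n1; rewrite mT.
move=> a b [ha Ha] [hb Hb] mab.
case: (pselect (m a)) => [|na]; [by left|right].
case: (pselect (m b)) => [//|nb]; exfalso.
have gq := quot_graded hR gm Hb.
have [[_ _ mM] _] := gm.
have fq : famI RG [set r | m (r * b)].
  by split => //= H; apply: nb; rewrite mul1r in H.
have mq : m `<=` [set r | m (r * b)] by move=> x xm /=; rewrite mulrC; apply: mM.
have E := mx _ fq mq.
have : [set r | m (r * b)] a by [].
by rewrite E.
Qed.
Lemma T1_iff (R : comNzRingType) (G : eqType) (RG : G -> set R) (M : lmodType R)
  (MG : G -> set M) :
  qpT1 RG MG <-> (forall Q Q', qpSpec RG MG Q -> qpSpec RG MG Q' -> Q <> Q' ->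
     ~ (Gr RG (colon Q') `<=` Gr RG (colon Q))).
Proof.
split.
  move=> T1 Q Q' SQ SQ' nQ sub.
  have [F [[K [gK ->]] [[_ FQ'] nFQ]]] := T1 Q Q' SQ SQ' nQ.
  by apply: nFQ; split => //; apply: subset_trans sub.
move=> H Q Q' SQ SQ' nQ; exists (qpV RG MG Q'); split.
  by have [[gQ' _ _] _] := SQ'; exists Q'.
split; first by split.
by move=> [_ sub]; apply: (H Q Q').
Qed.

Lemma T0_inj (R : comNzRingType) (G : eqType) (RG : G -> set R) (M : lmodType R)
  (MG : G -> set M) : qpT0 RG MG ->
  forall Q Q', qpSpec RG MG Q -> qpSpec RG MG Q' -> Q <> Q' ->
     Gr RG (colon Q) <> Gr RG (colon Q').
Proof.
move=> T0 Q Q' SQ SQ' nQ E.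
have [F [[K [gK ->]] [[[_ s1] n2]|[[_ s2] n1]]]] := T0 Q Q' SQ SQ' nQ.
- by apply: n2; split => //; rewrite -E.
- by apply: n1; split => //; rewrite E.
Qed.

Lemma notT1 (R : comNzRingType) (I : set R) :
  (forall r x, I x -> I (r * x)) -> I <> setT -> ~ I 1.
Proof.
move=> IM nT I1; apply: nT; apply/seteqP; split => // x _.
by rewrite -(mulr1 x); apply: IM.
Qed.

Lemma key (R : comNzRingType) (G : eqType) (L : group_law G)
  (RG : G -> set R) (M : lmodType R) (MG : G -> set M)
  (hR : graded_ring L RG) (hM : graded_module L RG MG) (K : set M) :
  qpSpec RG MG K ->
  (forall Q, qpSpec RG MG Q -> forall K, qpSpec RG MG K -> Q `<=` K -> Q = K) ->
  exists m, [/\ graded_prime_ideal RG m, colon K = m &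
     forall p, famI RG p -> m `<=` p -> p = m].
Proof.
move=> SK anti.
have [[gK nK _] pfK] := SK.
have fC : famI RG (colon K).
  split; first by apply: (colon_graded hM); exact: gK.
  move=> C1; apply: nK; apply/seteqP; split => // x _.
  by have := C1 x; rewrite scale1r.
have [m [fm Cm mmax]] := max_ideal fC.
have pm := max_prime hR fm mmax.
have [P [gpP KP colP]] := pfK m pm Cm.
have SP : qpSpec RG MG P.
  have [gP nP pP] := gpP.
  split.
    split => // r x hr hx Prx.
    case: (pP r x hr hx Prx) => [Px|cPr].
      by right => P2 _ PP2; apply: PP2.
    by left; apply: (sub_Gr (colon_graded hM gP)).
  move=> p gpp cPp; exists P; split => //.
  have [[[_ _ pM] _] pT _] := gpp.
  rewrite colP; symmetry; apply: mmax; last by rewrite -colP.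
  by split; [case: gpp|apply: notT1].
have E := anti K SK P SP KP.
by exists m; split => //; rewrite E.
Qed.

Lemma T1_of_anti (R : comNzRingType) (G : eqType) (L : group_law G)
  (RG : G -> set R) (M : lmodType R) (MG : G -> set M)
  (hR : graded_ring L RG) (hM : graded_module L RG MG) :
  qpT0 RG MG ->
  (forall Q, qpSpec RG MG Q -> forall K, qpSpec RG MG K -> Q `<=` K -> Q = K) ->
  qpT1 RG MG.
Proof.
move=> T0 anti; apply/T1_iff => Q Q' SQ SQ' nQ sub.
have [m [pm Cm mmax]] := key hR hM SQ anti.
have [m' [pm' Cm' mmax']] := key hR hM SQ' anti.
apply: (T0_inj T0 SQ SQ' nQ).
suff E : m = m' by rewrite Cm Cm' E.
apply: mmax'.
  have [gm nT _] := pm; split => //; apply: notT1 => //; by case: gm => [[]].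
have [gm' _ _] := pm'.
move=> x /(sub_Gr gm'); rewrite -Cm' => /sub; rewrite Cm.
exact: (Gr_prime hR pm).
Qed.

Theorem theorem4p4 (R : comNzRingType) (G : eqType) (L : group_law G)
  (RG : G -> set R) (M : lmodType R) (MG : G -> set M)
  (hR : graded_ring L RG) (hM : graded_module L RG MG) :
  [/\ (qpT1 RG MG <->
        qpT0 RG MG /\
        (forall Q, qpSpec RG MG Q -> forall K, qpSpec RG MG K ->
           Gr RG (colon Q) `<=` Gr RG (colon K) -> Gr RG (colon Q) = Gr RG (colon K))),
      (qpT1 RG MG <->
        qpT0 RG MG /\
        (forall Q, qpSpec RG MG Q -> forall K, qpSpec RG MG K -> Q `<=` K -> Q = K)),
      (qpSpec RG MG [set 0] ->
        (qpT1 RG MG <-> forall Q, qpSpec RG MG Q -> Q = [set 0])) &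
      (qpT0 RG MG -> qpSpec RG MG = MaxG MG -> qpT1 RG MG)].
Proof.
have T1T0 : qpT1 RG MG -> qpT0 RG MG.
  move=> T1 Q Q' SQ SQ' nQ; have [F [cF [FQ' nFQ]]] := T1 Q Q' SQ SQ' nQ.
  by exists F; split => //; right.
split.
- split.
    move=> T1; split; first exact: T1T0.
    move=> Q SQ K SK sub.
    case: (pselect (Q = K)) => [->//|nQK].
    by exfalso; apply: (proj1 (T1_iff RG MG) T1 K Q SK SQ (nesym nQK)).
  move=> [T0 mx]; apply/T1_iff => Q Q' SQ SQ' nQ sub.
  by apply: (T0_inj T0 SQ SQ' nQ); symmetry; apply: mx.
- split; first last.
    by move=> [T0 anti]; apply: (T1_of_anti hR hM).
  move=> T1; split; first exact: T1T0.
  move=> Q SQ K SK QK.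
  case: (pselect (Q = K)) => [//|nQK]; exfalso.
  apply: (proj1 (T1_iff RG MG) T1 K Q SK SQ (nesym nQK)).
  by apply: Gr_mono; apply: colon_mono.
- move=> S0; split.
    move=> T1 Q SQ; case: (pselect (Q = [set 0])) => [//|nQ]; exfalso.
    apply: (proj1 (T1_iff RG MG) T1 Q [set 0] SQ S0 nQ).
    apply: Gr_mono; apply: colon_mono => x -> /=.
    by have [[[[Q0 _ _] _] _ _] _] := SQ.
  move=> H; apply/T1_iff => Q Q' SQ SQ' nQ.
  by exfalso; apply: nQ; rewrite (H _ SQ) (H _ SQ').
- move=> T0 E; apply: (T1_of_anti hR hM) => // Q SQ K SK QK.
  move: SQ SK; rewrite E => -[gQ nQ mQ] [gK nK _].
  by case: (mQ K gK QK).
Qed.
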